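(* Let $R$ be a regular ring with unity, let $E$ be the biordered set of idempotents of $R$, and for $e\in E$ put $e'=1-e$. If $e,f\in E$ satisfy $f\,\omega\,e'$, then there is exactly one element of $E$ that belongs to both sandwich sets $S(e',f')$ and $S(f',e')$.
   Context: A ring is regular if for every $x$ there is $y$ with $xyx=x$. The biordered set $E$ of $R$ is the set of idempotents with the partial product $ef$ (computed in $R$) defined when $\{ef,fe\}\cap\{e,f\}\ne\emptyset$. In $E$: $f\,\omega^l\,e$ iff $fe=f$; $f\,\omega^r\,e$ iff $ef=f$; $\omega=\omega^l\cap\omega^r$; $M(e,f)=\{g\in E: ge=g,\ fg=g\}$; for $g,h\in M(e,f)$, $g\preceq h$ iff $eg\,\omega^r\,eh$ and $gf\,\omega^l\,hf$; and $S(e,f)=\{h\in M(e,f): g\preceq h\text{ for all }g\in M(e,f)\}$. *)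

(* Defs.v *)
From mathcomp Require Import all_boot all_algebra.
Set Implicit Arguments. Unset Strict Implicit. Unset Printing Implicit Defensive.
Import GRing.Theory.
Local Open Scope ring_scope.

Definition regular_ring (R : pzRingType) : Prop :=
  forall x : R, exists y : R, x * y * x = x.

Definition idem (R : pzRingType) (e : R) : Prop := e * e = e.

Definition omega_l (R : pzRingType) (f e : R) : Prop := f * e = f.
Definition omega_r (R : pzRingType) (f e : R) : Prop := e * f = f.
Definition omega (R : pzRingType) (f e : R) : Prop := omega_l f e /\ omega_r f e.

Definition compl (R : pzRingType) (e : R) : R := 1 - e.

Definition M_set (R : pzRingType) (e f g : R) : Prop :=
  idem g /\ g * e = g /\ f * g = g.

Definition sand_le (R : pzRingType) (e f g h : R) : Prop :=
  omega_r (e * g) (e * h) /\ omega_l (g * f) (h * f).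

Definition S_set (R : pzRingType) (e f h : R) : Prop :=
  M_set e f h /\ forall g : R, M_set e f g -> sand_le e f g h.

(* Main.v *)
Require Import Defs.
From mathcomp Require Import all_boot all_algebra.
Local Open Scope ring_scope.
Import GRing.Theory.

Lemma key (R : pzRingType) (e f : R) (he : idem e) (hf : idem f)
  (ef0 : e * f = 0) (fe0 : f * e = 0) :
  S_set (compl e) (compl f) (1 - e - f).
Proof.
have hh : (1 - e - f) * (1 - e - f) = 1 - e - f.
  rewrite !mulrBl !mulrBr !mul1r !mulr1 he hf ef0 fe0.
  by rewrite !subr0 !subrr !subr0.
have h1 : (1 - e - f) * compl e = 1 - e - f.
  by rewrite /compl !mulrBl !mulrBr !mul1r !mulr1 he fe0 subr0 subrr subr0.
have h2 : compl f * (1 - e - f) = 1 - e - f.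
  by rewrite /compl !mulrBl !mulrBr !mul1r !mulr1 hf fe0 subr0 subrr subr0.
have h3 : compl e * (1 - e - f) = 1 - e - f.
  by rewrite /compl !mulrBl !mulrBr !mul1r !mulr1 he ef0 subr0 subrr subr0.
have h4 : (1 - e - f) * compl f = 1 - e - f.
  by rewrite /compl !mulrBl !mulrBr !mul1r !mulr1 hf ef0 !subr0 subrr subr0 addrAC.
split; first by split.
move=> g [gg [ge fg]].
have ge0 : g * e = 0.
  have -> : g * e = g - g * compl e by rewrite /compl mulrBr mulr1 opprB addrC subrK.
  by rewrite ge subrr.
have fg0 : f * g = 0.
  have -> : f * g = g - compl f * g by rewrite /compl mulrBl mul1r opprB addrC subrK.
  by rewrite fg subrr.
split.
- by rewrite /omega_r h3 mulrA h1 /compl !mulrBl !mul1r fg0 subr0.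
- by rewrite /omega_l h4 -mulrA h2 /compl !mulrBr !mulr1 ge0 subr0.
Qed.

Lemma zl (R : pzRingType) (g e : R) : g * compl e = g -> g * e = 0.
Proof.
move=> ge.
have -> : g * e = g - g * compl e by rewrite /compl mulrBr mulr1 opprB addrC subrK.
by rewrite ge subrr.
Qed.

Lemma zr (R : pzRingType) (g e : R) : compl e * g = g -> e * g = 0.
Proof.
move=> ge.
have -> : e * g = g - compl e * g by rewrite /compl mulrBl mul1r opprB addrC subrK.
by rewrite ge subrr.
Qed.

Theorem proposition2p4 (R : pzRingType) (hR : regular_ring R) (e f : R)
  (he : idem e) (hf : idem f) (hfe : omega f (compl e)) :
  exists! h : R, idem h /\ S_set (compl e) (compl f) h /\ S_set (compl f) (compl e) h.
Proof.
case: hfe => [h1 h2].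
have fe0 := zl _ _ _ h1.
have ef0 := zr _ _ _ h2.
have K1 := key _ _ _ he hf ef0 fe0.
have K2 := key _ _ _ hf he fe0 ef0.
rewrite addrAC in K2.
exists (1 - e - f); split.
  by split; [case: K1 => [[]] | split].
move=> k [_ [[[kk [ke fk]] Sk] [[_ [kf ek]] _]]].
have ke0 := zl _ _ _ ke. have fk0 := zr _ _ _ fk. have kf0 := zl _ _ _ kf. have ek0 := zr _ _ _ ek.
have hM : M_set (compl e) (compl f) (1 - e - f) by case: K1.
case: (Sk _ hM) => + _.
rewrite /omega_r.
have -> : compl e * k = k by [].
have -> : compl e * (1 - e - f) = 1 - e - f
  by rewrite /compl !mulrBl !mulrBr !mul1r !mulr1 he ef0 subr0 subrr subr0.
by rewrite !mulrBr mulr1 ke0 kf0 !subr0 => ->.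
Qed.
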